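(* Let $d=d(n)$ satisfy $12 \le d \le e^{\sqrt[3]{\log n}}$ and let $m = m(n,d) = \frac{\log n \,\log\log\log n}{\log d\, \log\log n}$. If $p=p(n) \ge 16520\, \frac{m\log(e\cdot 4130\, m)}{n}$, then for all sufficiently large $n$, the probability that $G(n,p)$ fails to satisfy property P2 is less than $e^{-2np}$, where P2 is the property: for every pair of disjoint vertex sets $A,B$ with $|A|,|B| \ge \frac{n}{4130m}$, there is at least one edge between $A$ and $B$.
   Context: $G(n,p)$ is the Erdős–Rényi random graph on vertex set of size $n$ in which each pair of vertices is an edge independently with probability $p$; $\log$ is the natural logarithm. *)

(* Defs.v *)
From HB Require Import structures.
From mathcomp Require Import all_boot all_order all_algebra.
From mathcomp Require Import all_classical all_reals all_analysis.
Set Implicit Arguments. Unset Strict Implicit. Unset Printing Implicit Defensive.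
Import Order.TTheory GRing.Theory Num.Theory.
Local Open Scope ring_scope.

Definition pairs (n : nat) : {set {set 'I_n}} := [set e : {set 'I_n} | #|e| == 2%N].

Definition is_graph (n : nat) (G : {set {set 'I_n}}) : bool := G \subset pairs n.

Definition gnp_weight (R : realType) (n : nat) (p : R) (G : {set {set 'I_n}}) : R :=
  p ^+ #|G| * (1 - p) ^+ (#|pairs n| - #|G|).

Definition gnp_prob (R : realType) (n : nat) (p : R)
    (Q : pred {set {set 'I_n}}) : R :=
  \sum_(G : {set {set 'I_n}} | is_graph G && Q G) gnp_weight p G.

Definition m_nd (R : realType) (n : nat) (d : R) : R :=
  (ln (n%:R : R) * ln (ln (ln (n%:R : R)))) / (ln d * ln (ln (n%:R : R))).

Definition P2 (R : realType) (n : nat) (m : R) (G : {set {set 'I_n}}) : Prop :=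
  forall A B : {set 'I_n}, [disjoint A & B] ->
    n%:R / (4130 * m) <= #|A|%:R -> n%:R / (4130 * m) <= #|B|%:R ->
    exists a b, [/\ a \in A, b \in B & [set a; b] \in G].

Definition P2b (R : realType) (n : nat) (m : R) : pred {set {set 'I_n}} :=
  fun G => `[< P2 m G >].

(* Main.v *)
Require Import Defs.
From HB Require Import structures.
From mathcomp Require Import all_boot all_order all_algebra.
Import Order.TTheory GRing.Theory Num.Theory.
Local Open Scope ring_scope.
From mathcomp Require Import ring lra.

Set Implicit Arguments. Unset Strict Implicit.

Lemma t1 (R : realFieldType) (a y : R) : 1 + 3^-1 * y <= a -> y <= 3 * a.
Proof. lra. Qed.
Lemma t2 (R : realFieldType) (a y : R) : 1 + 3^-1 * y <= a -> 0 < y -> 1 <= a.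
Proof. lra. Qed.

Lemma H_m13 (R : realFieldType) (x y z D a : R) :
  0 < D -> 0 < y -> D <= a -> y <= 3 * a -> 1 <= a -> a ^+ 3 = x -> 1 <= z ->
  3^-1 <= x * z / (D * y).
Proof.
move=> D0 y0 Da ya a1 a3 z1.
have Dy0 : 0 < D * y by rewrite mulr_gt0.
rewrite ler_pdivlMr //.
have h1 : D * y <= a * (3 * a) by rewrite ler_pM // ltW.
have h2 : a * a <= x by rewrite -a3 !exprS expr0 mulr1; nra.
have x0 : 0 < x by rewrite -a3 exprn_gt0 //; lra.
have h3 : x <= x * z by nra.
lra.
Qed.

Lemma H_mc (R : realFieldType) (x y z D c : R) :
  0 < c -> c <= D -> 0 < y -> z < y -> 0 < x -> 0 <= z ->
  x * z / (D * y) * c <= x.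
Proof.
move=> c0 cD y0 zy x0 z0.
have D0 : 0 < D by lra.
have Dy0 : 0 < D * y by rewrite mulr_gt0.
rewrite mulrAC ler_pdivrMr //.
have : z * c <= y * D by rewrite ler_pM // ?ltW.
nra.
Qed.

Lemma H_pt (R : realFieldType) (n m L p : R) :
  0 < n -> 0 < m -> 16520 * (m * L) / n <= p -> 0 <= L ->
  4 * L <= p * (n / (4130 * m)).
Proof.
move=> n0 m0 hp L0.
have t0 : 0 <= n / (4130 * m) by rewrite divr_ge0 // ?mulr_ge0 // ltW.
have e : 16520 * (m * L) / n * (n / (4130 * m)) = 4 * L.
  field; rewrite ?gt_eqF //; lra.
by rewrite -e ler_wpM2r.
Qed.

Lemma H_arg (R : realFieldType) (e m : R) : 2 <= e -> 3^-1 <= m -> 1 < e * 4130 * m.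
Proof. move=> h1 h2; nra. Qed.

Lemma H_n4 (R : realFieldType) (n x c : R) :
  0 < x -> 0 < c -> (x / 3) ^+ 3 <= n -> 108 * 4130 ^+ 2 < x * c ^+ 2 ->
  4 * 4130 ^+ 2 * x ^+ 2 < n * c ^+ 2.
Proof.
move=> x0 c0 hn hx.
have h1 : (x / 3) ^+ 3 * c ^+ 2 <= n * c ^+ 2 by rewrite ler_wpM2r // exprn_ge0 // ltW.
have h2 : (x / 3) ^+ 3 * c ^+ 2 = x ^+ 2 * (x * c ^+ 2) / 27.
  by field.
have h3 : x ^+ 2 * (108 * 4130 ^+ 2) < x ^+ 2 * (x * c ^+ 2) by rewrite ltr_pM2l // exprn_gt0.
lra.
Qed.

Lemma H_tt (R : realFieldType) (n x c m : R) :
  0 < n -> 0 < m -> 0 < c -> m * c <= x ->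
  4 * 4130 ^+ 2 * x ^+ 2 < n * c ^+ 2 -> 4 * n < n / (4130 * m) * (n / (4130 * m)).
Proof.
move=> n0 m0 c0 mc h.
have M0 : 0 < 4130 * m by rewrite mulr_gt0 //; lra.
have e : n / (4130 * m) * (n / (4130 * m)) = n * n / (4130 * m) ^+ 2 by field; rewrite gt_eqF.
rewrite e ltr_pdivlMr ?exprn_gt0 //.
have x0 : 0 < x := lt_le_trans (mulr_gt0 m0 c0) mc.
have h1 : (m * c) ^+ 2 <= x ^+ 2.
  by apply: lerXn2r => //; rewrite nnegrE ?mulr_ge0 // ltW.
have h2 : 4 * (4130 * m) ^+ 2 * c ^+ 2 < n * c ^+ 2.
  have e2 : 4 * (4130 * m) ^+ 2 * c ^+ 2 = 4 * 4130 ^+ 2 * (m * c) ^+ 2 by ring.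
  rewrite e2; apply: le_lt_trans h; rewrite ler_wpM2l //.
  by rewrite mulr_ge0 // exprn_ge0.
have h3 : 4 * (4130 * m) ^+ 2 < n by rewrite -(ltr_pM2r (exprn_gt0 2 c0)).
nra.
Qed.

Lemma H_nk (R : realFieldType) (n m k : R) :
  0 < n -> 0 < m -> n / (4130 * m) <= k -> n / k <= 4130 * m.
Proof.
move=> n0 m0 h.
have M0 : 0 < 4130 * m by rewrite mulr_gt0 //; lra.
have k0 : 0 < k by apply: lt_le_trans h; rewrite divr_gt0.
rewrite ler_pdivrMr // in h; rewrite ler_pdivrMr //; nra.
Qed.

Lemma two_le (R : realFieldType) (e : R) : 1 + 1 <= e -> 2 <= e.
Proof. lra. Qed.

Lemma pos_const (R : realFieldType) (m L n : R) :
  0 < m -> 0 < L -> 0 < n -> 0 < 16520 * (m * L) / n.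
Proof. move=> *; rewrite divr_gt0 // mulr_gt0 ?mulr_gt0 //; lra. Qed.

Lemma lt1_12 (R : realFieldType) : (1 : R) < 12. Proof. lra. Qed.
Lemma lt0_12 (R : realFieldType) : (0 : R) < 12. Proof. lra. Qed.
Lemma lt0_3i (R : realFieldType) : (0 : R) < 3^-1. Proof. rewrite invr_gt0; lra. Qed.

Lemma H_exp (R : realFieldType) (k L p : R) :
  2 * (k * L) + (k * k) * - p = 2 * k * L - p * (k * k).
Proof. ring. Qed.

Lemma H_t0 (R : realFieldType) (n m : R) : 0 < n -> 0 < m -> 0 < n / (4130 * m).
Proof. move=> n0 m0; rewrite divr_gt0 // mulr_gt0 //; lra. Qed.

Lemma two_gt1 (R : realFieldType) : (1 : R) < 2. Proof. lra. Qed.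
Lemma H_4130 (R : realFieldType) : (2 : R) <= 4130. Proof. lra. Qed.
Lemma H_4130m (R : realFieldType) (m : R) : 0 < m -> 0 < 4130 * m.
Proof. move=> m0; rewrite mulr_gt0 //; lra. Qed.


Unset Implicit Arguments. Set Strict Implicit.

From mathcomp Require Import all_classical all_reals all_analysis.
Import Order.TTheory GRing.Theory Num.Theory.
Local Open Scope ring_scope.
From mathcomp Require Import zify ring lra.

Lemma subset_sum (R : comPzRingType) (T : finType) (U : {set T}) (x y : R) :
  \sum_(J : {set T} | J \subset U) x ^+ #|J| * y ^+ (#|U| - #|J|) = (x + y) ^+ #|U|.
Proof.
rewrite -prodr_const.
have -> : \prod_(i in U) (x + y) =
   \prod_i ((if i \in U then x else 0) + (if i \in U then y else 1)).
  rewrite [RHS](bigID (fun i => i \in U)) /= [X in _ = _ * X]big1 ?mulr1.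
    by apply: eq_bigr => i ->.
  by move=> i /negbTE ->; rewrite add0r.
rewrite bigA_distr.
rewrite [RHS](bigID (fun J : {set T} => J \subset U)) /= [X in _ = _ + X]big1 ?addr0.
  apply: eq_big => [J|J sJU]; first by [].
  symmetry; rewrite (bigID (fun i => i \in J)) /=.
  congr (_ * _).
    rewrite -prodr_const; apply: eq_bigr => i iJ.
    by rewrite iJ (fintype.subsetP sJU i iJ).
  rewrite -(cardsDS sJU) -prodr_const (bigID (fun i => i \in U)) /=.
  rewrite [X in _ * X]big1 ?mulr1; last first.
    move=> i /andP[].
    by move=> /negbTE -> /negbTE ->.
  apply: eq_big => [i|i /andP[/negbTE -> ->]//].
  by rewrite finset.in_setD andbC.
move=> J /fintype.subsetPn [i iJ niU].
by rewrite (bigD1 i) //= iJ (negbTE niU) mul0r.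
Qed.


Lemma avoid_sum (R : comPzRingType) (T : finType) (U E : {set T}) (p : R) :
  E \subset U ->
  \sum_(G : {set T} | (G \subset U) && [disjoint E & G])
     p ^+ #|G| * (1 - p) ^+ (#|U| - #|G|) = (1 - p) ^+ #|E|.
Proof.
move=> sEU.
have cE := subset_leq_card sEU.
rewrite (eq_bigl (fun G : {set T} => G \subset U :\: E)); last first.
  by move=> G; rewrite subsetD disjoint_sym.
rewrite (eq_bigr (fun G : {set T} => (p ^+ #|G| * (1 - p) ^+ (#|U :\: E| - #|G|)) * (1 - p) ^+ #|E|)).
  by rewrite -mulr_suml subset_sum addrC subrK expr1n mul1r.
move=> G sG; rewrite -mulrA -exprD; congr (_ * _ ^+ _).
have := subset_leq_card sG; rewrite cardsDS //; lia.
Qed.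

Definition edges_between (n : nat) (A B : {set 'I_n}) : {set {set 'I_n}} :=
  [set [set x.1; x.2] | x in finset.setX A B].
Arguments edges_between {n}.

Lemma edges_between_sub n (A B : {set 'I_n}) :
  [disjoint A & B] -> edges_between A B \subset pairs n.
Proof.
move=> dAB; apply/fintype.subsetP => e /imsetP [[a b] /finset.setXP [aA bB] ->] /=.
rewrite inE cards2.
suff -> : a != b by [].
apply/eqP => eab; subst b.
by rewrite (disjointFr dAB aA) in bB.
Qed.

Lemma card_edges_between n (A B : {set 'I_n}) :
  [disjoint A & B] -> #|edges_between A B| = (#|A| * #|B|)%N.
Proof.
move=> dAB; rewrite /edges_between card_in_imset ?finset.cardsX //.
have nAB : forall x, x \in A -> x \in B -> False.
  by move=> x xA xB; rewrite (disjointFr dAB xA) in xB.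
move=> [a b] [a' b'] /finset.setXP [/= aA bB] /finset.setXP [/= aA' bB'] /= e.
have : a \in [set a'; b'] by rewrite -e set21.
rewrite in_set2 => /orP [/eqP -> | /eqP eab']; last by subst; case: (nAB b' aA bB').
have : b \in [set a'; b'] by rewrite -e set22.
rewrite in_set2 => /orP [/eqP eba' | /eqP -> //]; by subst; case: (nAB a' aA' bB).
Qed.

Lemma weight_ge0 (R : realType) n (p : R) (G : {set {set 'I_n}}) :
  0 <= p -> p <= 1 -> 0 <= gnp_weight p G.
Proof.
by move=> p0 p1; rewrite /gnp_weight mulr_ge0 // exprn_ge0 // subr_ge0.
Qed.

Lemma union_bound (R : realType) n (p : R) (k : nat) (Q : pred {set {set 'I_n}}) :
  0 <= p -> p <= 1 ->
  (forall G, is_graph G -> ~~ Q G -> exists A B : {set 'I_n},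
     [/\ #|A| = k, #|B| = k, [disjoint A & B] & [disjoint edges_between A B & G]]) ->
  gnp_prob p (predC Q) <= ('C(n, k) ^ 2)%:R * (1 - p) ^+ (k * k).
Proof.
move=> p0 p1 hyp.
pose c (A B : {set 'I_n}) (G : {set {set 'I_n}}) : bool :=
  [&& #|A| == k, #|B| == k, [disjoint A & B] & [disjoint edges_between A B & G]].
have q0 : 0 <= 1 - p by rewrite subr_ge0.
apply: (@le_trans _ _ (\sum_(G | is_graph G)
   (\sum_A \sum_B (c A B G)%:R) * gnp_weight p G)).
  rewrite /gnp_prob big_mkcondr /=; apply: ler_sum => G gG.
  case: ifP => nQ; last first.
    apply: mulr_ge0; last exact: weight_ge0.
    by apply: sumr_ge0 => A _; apply: sumr_ge0 => B _; rewrite ler0n.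
  have [A0 [B0 [cA cB dAB dE]]] := hyp G gG nQ.
  rewrite -[X in X <= _]mul1r ler_wpM2r ?weight_ge0 //.
  rewrite (bigD1 A0) //= (bigD1 B0) //=.
  have -> : c A0 B0 G by rewrite /c cA cB dAB dE !eqxx.
  rewrite -addrA lerDl; apply: addr_ge0; apply: sumr_ge0 => ? _.
    by rewrite ler0n.
  by apply: sumr_ge0 => ? _; rewrite ler0n.
under eq_bigr => G _ do rewrite mulr_suml.
rewrite exchange_big /=.
apply: (@le_trans _ _ (\sum_(A : {set 'I_n}) (#|A| == k)%:R *
     \sum_(B : {set 'I_n}) ((#|B| == k)%:R * (1 - p) ^+ (k * k)))).
  apply: ler_sum => A _.
  under eq_bigr => G _ do rewrite mulr_suml.
  rewrite exchange_big /= mulr_sumr; apply: ler_sum => B _.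
  rewrite /c; case hA: (#|A| == k); case hB: (#|B| == k); case hD : [disjoint A & B] => /=;
    try (rewrite big1; [by rewrite ?mul0r ?mul1r ?exprn_ge0 | by move=> G _; rewrite mul0r]).
  rewrite !mul1r.
  rewrite (eq_bigr (fun G : {set {set 'I_n}} => if [disjoint edges_between A B & G] then gnp_weight p G else 0)); last first.
    by move=> G _; case: ifP; rewrite ?mul1r ?mul0r.
  rewrite -big_mkcondr /=.
  rewrite /gnp_weight /is_graph avoid_sum ?edges_between_sub //.
  by rewrite card_edges_between // (eqP hA) (eqP hB).
have hs : \sum_(B : {set 'I_n}) (#|B| == k)%:R = ('C(n, k))%:R :> R.
  rewrite (eq_bigr (fun B : {set 'I_n} => if #|B| == k then 1 else 0)); last first.
    by move=> B _; case: (#|B| == k).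
  rewrite -big_mkcond sumr_const; congr (_ *+ _).
  rewrite -[in RHS](card_ord n) -card_draws; apply: eq_card => B.
  by rewrite inE.
rewrite -mulr_suml hs -mulr_suml hs natrX expr2 mulrA.
by [].
Qed.

Lemma sub_card (T : finType) (A : {set T}) (k : nat) :
  (k <= #|A|)%N -> exists B : {set T}, B \subset A /\ #|B| = k.
Proof.
elim: k => [|k IH] hk.
  by exists finset.set0; rewrite finset.sub0set cards0.
have [B [sBA cB]] := IH (ltnW hk).
have : A :\: B != finset.set0.
  by rewrite -card_gt0 cardsDS // cB subn_gt0.
case/finset.set0Pn => x /finset.setDP [xA xB].
exists (x |: B); split.
  by rewrite finset.subUset finset.sub1set xA sBA.
by rewrite finset.cardsU1 xB cB.
Qed.

Lemma bad_exists (R : realType) n (m : R) (k : nat) (G : {set {set 'I_n}}) :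
  (forall j : nat, n%:R / (4130 * m) <= j%:R -> (k <= j)%N) ->
  ~~ P2b m G -> exists A B : {set 'I_n},
     [/\ #|A| = k, #|B| = k, [disjoint A & B] & [disjoint edges_between A B & G]].
Proof.
move=> hk /asboolPn nP.
case: (pselect (exists A B : {set 'I_n},
     [/\ #|A| = k, #|B| = k, [disjoint A & B] & [disjoint edges_between A B & G]])) => // H.
exfalso; apply: nP => A B dAB hA hB.
have [A' [sA cA]] := sub_card _ _ _ (hk _ hA).
have [B' [sB cB]] := sub_card _ _ _ (hk _ hB).
have dAB' : [disjoint A' & B'] by apply: (disjointW sA sB).
have : ~~ [disjoint edges_between A' B' & G].
  by apply/negP => dE; apply: H; exists A', B'.
rewrite -setI_eq0 => /finset.set0Pn [e /finset.setIP [eE eG]].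
case/imsetP: eE => [[a b] /finset.setXP [/= aA bB] ee].
exists a, b; split => //.
  exact: (fintype.subsetP sA).
  exact: (fintype.subsetP sB).
by rewrite -ee.
Qed.


Set Implicit Arguments. Unset Strict Implicit.

Lemma final_ineq (R : realType) (n k p L t : R) :
  0 < t -> t <= k -> 0 < p -> 0 <= L -> 4 * L <= p * t -> 4 * n < t * t ->
  2 * k * L - p * (k * k) < - (2 * n * p).
Proof.
move=> t0 tk p0 L0 hL hn.
have h1 : 4 * L <= p * k by apply: (le_trans hL); rewrite ler_pM2l.
have h2 : 4 * n < k * k by apply: (lt_le_trans hn); nra.
nra.
Qed.

Lemma binom_bound (R : realType) (n k : nat) : (0 < k)%N -> (0 < n)%N ->
  ('C(n, k))%:R <= expR (k%:R) * (n%:R / k%:R) ^+ k :> R.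
Proof.
move=> k0 n0.
have kR : (0 : R) < k%:R by rewrite ltr0n.
have nR : (0 : R) < n%:R by rewrite ltr0n.
case: (leqP k n) => kn; last first.
  rewrite bin_small // mulr_ge0 // ?expR_ge0 // exprn_ge0 // divr_ge0 // ltW.
set x : R := k%:R / n%:R.
have x0 : 0 < x by rewrite divr_gt0.
have h1 : 'C(n, k)%:R * x ^+ k <= (1 + x) ^+ n.
  rewrite mulr_natl exprDn (bigD1 (Ordinal (kn : (k < n.+1)%N))) //= expr1n mul1r.
  rewrite lerDl; apply: sumr_ge0 => i _.
  by rewrite mulrn_wge0 // mulr_ge0 // exprn_ge0 // ltW.
have h2 : (1 + x) ^+ n <= expR k%:R.
  have -> : (k%:R : R) = n%:R * x by rewrite /x mulrC divfK // gt_eqF.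
  rewrite expRM_natl; apply: lerXn2r; rewrite ?nnegrE ?expR_ge0 //.
    by rewrite addr_ge0 // ltW.
  exact: expR_ge1Dx.
have -> : (n%:R / k%:R : R) = x^-1 by rewrite /x invf_div.
rewrite exprVn ler_pdivlMr ?exprn_gt0 //.
exact: le_trans h1 h2.
Qed.

Lemma ceil_nat (R : realType) (t : R) : 0 <= t ->
  exists k : nat, t <= k%:R /\ (forall j : nat, t <= j%:R -> (k <= j)%N).
Proof.
move=> t0.
have c0 : (0 <= Num.ceil t)%R by rewrite ceil_ge0 (lt_le_trans _ t0) // ltrN10.
exists `|Num.ceil t|%N; split.
  by rewrite natr_absz ger0_norm // ceil_ge.
move=> j hj; rewrite -lez_nat abszE ger0_norm // ceil_le_int.
exact: hj.
Qed.

Lemma exp_cube (R : realType) (x : R) : 0 <= x -> (x / 3) ^+ 3 <= expR x.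
Proof.
move=> x0.
have -> : expR x = expR (x / 3) ^+ 3.
  by rewrite -expRM_natl mulrC divfK // pnatr_eq0.
apply: lerXn2r; rewrite ?nnegrE ?expR_ge0 ?divr_ge0 //.
  by apply: le_trans (expR_ge1Dx _); rewrite lerDr.
Qed.

Lemma big_n (R : realType) (K : R) (n : nat) :
  ((Num.truncn (expR K)).+1 <= n)%N -> K < ln (n%:R : R).
Proof.
move=> hn.
have h : expR K < n%:R.
  by apply: lt_le_trans (truncnS_gt _) _; rewrite ler_nat.
have n0 : (0 : R) < n%:R := lt_trans (expR_gt0 _) h.
by rewrite -[X in X < _](expRK K) ltr_ln ?posrE ?expR_gt0.
Qed.

Lemma main_n (R : realType) (n : nat) (dn p : R) :
  (0 < n)%N ->
  expR (expR 1) <= ln (n%:R : R) ->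
  108 * 4130 ^+ 2 < ln (n%:R : R) * (ln (12 : R)) ^+ 2 ->
  12 <= dn -> dn <= expR (powR (ln (n%:R : R)) (3^-1)) -> 0 <= p -> p <= 1 ->
  16520 * (m_nd n dn * ln (expR 1 * 4130 * m_nd n dn)) / n%:R <= p ->
  @gnp_prob R n p (predC (P2b (m_nd n dn))) < expR (- (2 * n%:R * p)).
Proof.
move=> n0' hx hxc hd12 hdu p0 p1 hp.
have c0 : 0 < ln (12 : R) by rewrite ln_gt0 // lt1_12.
have n0 : 0 < (n%:R : R) by rewrite ltr0n.
have x0 : 0 < ln (n%:R : R) := lt_le_trans (expR_gt0 _) hx.
have xe : expR (ln (n%:R : R)) = n%:R by rewrite lnK // posrE.
set x := ln (n%:R : R) in hx hxc hdu x0 xe *.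
have hy : expR 1 <= ln x.
  by rewrite -[X in X <= _]expRK ler_ln ?posrE ?expR_gt0.
have y0 : 0 < ln x := lt_le_trans (expR_gt0 1) hy.
have ye : expR (ln x) = x by rewrite lnK // posrE.
set y := ln x in hy y0 ye *.
have hz : 1 <= ln y by rewrite -[X in X <= _](expRK 1) ler_ln ?posrE ?expR_gt0.
have zy : ln y < y := ln_sublinear y0.
set z := ln y in hz zy *.
have d0 : 0 < dn := lt_le_trans (lt0_12 R) hd12.
have cD : ln 12 <= ln dn by rewrite ler_ln ?posrE ?lt0_12.
set c := ln (12 : R) in c0 cD hxc *.
set D := ln dn in cD *.
have D0 : 0 < D := lt_le_trans c0 cD.
have Da : D <= expR (3^-1 * y).
  have : ln dn <= ln (expR (powR x 3^-1)) by rewrite ler_ln ?posrE ?expR_gt0.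
  by rewrite expRK /powR gt_eqF.
have ya : y <= 3 * expR (3^-1 * y) := t1 (expR_ge1Dx (3^-1 * y)).
have a1 : 1 <= expR (3^-1 * y) := t2 (expR_ge1Dx (3^-1 * y)) y0.
have a3 : expR (3^-1 * y) ^+ 3 = x.
  by rewrite -expRM_natl mulrA mulfV ?mul1r // pnatr_eq0.
have me : m_nd n dn = x * z / (D * y) by [].
set m := m_nd n dn in hp me *.
have m13 : 3^-1 <= m by rewrite me; exact: H_m13 D0 y0 Da ya a1 a3 hz.
have m0 : 0 < m := lt_le_trans (lt0_3i R) m13.
have z0 : 0 <= z := le_trans ler01 hz.
have mc : m * c <= x by rewrite me; exact: H_mc c0 cD y0 zy x0 z0.
have e2 : 2 <= expR (1 : R) := two_le (expR_ge1Dx 1).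
have arg1 := H_arg e2 m13.
have L0 : 0 < ln (expR 1 * 4130 * m) := ln_gt0 arg1.
have Le : expR (ln (expR 1 * 4130 * m)) = expR 1 * 4130 * m by rewrite lnK // posrE (lt_trans ltr01 arg1).
set L := ln (expR 1 * 4130 * m) in L0 Le hp.
have pt := H_pt n0 m0 hp (ltW L0).
have pp : 0 < p := lt_le_trans (pos_const m0 L0 n0) hp.
have hn3 : (x / 3) ^+ 3 <= n%:R by rewrite -xe; apply: exp_cube; exact: ltW.
have h4 := H_n4 x0 c0 hn3 hxc.
have tt := H_tt n0 m0 c0 mc h4.
set t := n%:R / (4130 * m) in pt tt.
have t0 : 0 < t := H_t0 n0 m0.
have [k [tk hk]] := ceil_nat (ltW t0).
have k0 : (0 < k)%N by rewrite -(ltr0n R); exact: lt_le_trans t0 tk.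
have U := @union_bound R n p k (P2b m) p0 p1
  (fun G _ nQ => @bad_exists R n m k G hk nQ).
apply: le_lt_trans U _.
have hC : ('C(n, k))%:R <= expR (k%:R * L).
  apply: (le_trans (@binom_bound R n k k0 n0')).
  have ek : expR k%:R = expR 1 ^+ k :> R by rewrite -expRM_natl mulr1.
  rewrite ek expRM_natl Le -mulrA [X in _ <= X]exprMn; apply: ler_wpM2l; first exact: exprn_ge0 (expR_ge0 _).
  apply: lerXn2r.
  - by rewrite nnegrE divr_ge0 ?ler0n.
  - by rewrite nnegrE; exact: ltW (H_4130m m0).
  - exact: H_nk n0 m0 tk.
have hq : (1 - p) ^+ (k * k) <= expR ((k * k)%:R * - p).
  rewrite expRM_natl; apply: lerXn2r; rewrite ?nnegrE ?expR_ge0 ?subr_ge0 //.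
  exact: expR_ge1Dx.
apply: (@le_lt_trans _ _ (expR (k%:R * L) ^+ 2 * expR ((k * k)%:R * - p))).
  rewrite natrX; apply: ler_pM; rewrite ?exprn_ge0 ?subr_ge0 ?ler0n //.
  by apply: lerXn2r; rewrite ?nnegrE ?expR_ge0 ?ler0n.
rewrite -expRM_natl -expRD ltr_expR natrM H_exp.
exact: final_ineq t0 tk pp (ltW L0) pt tt.
Qed.


Unset Implicit Arguments. Set Strict Implicit.

Theorem lemma16 (R : realType) (d p : nat -> R) :
  (exists N : nat, forall n : nat, (N <= n)%N ->
     [/\ 12 <= d n, d n <= expR (powR (ln (n%:R : R)) (3^-1)),
         0 <= p n, p n <= 1 &
         p n >= 16520 * (m_nd n (d n) * ln (expR 1 * 4130 * m_nd n (d n))) / n%:R]) ->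
  exists N : nat, forall n : nat, (N <= n)%N ->
    @gnp_prob R n (p n) (predC (P2b (m_nd n (d n)))) < expR (- (2 * n%:R * p n)).
Proof.
move=> [N0 HN].
exists (maxn N0 (maxn (Num.truncn (expR (expR (expR (1 : R))))).+1
                      (Num.truncn (expR (108 * 4130 ^+ 2 / (ln (12 : R)) ^+ 2 : R))).+1)).
move=> n; rewrite !geq_max => /andP [h0 /andP [h1 h2]].
have [hd1 hd2 hp0 hp1 hp] := HN n h0.
have n0 : (0 < n)%N := leq_trans (ltn0Sn _) h1.
have hK1 : expR (expR 1) <= ln (n%:R : R) := ltW (big_n h1).
have c2 : 0 < (ln (12 : R)) ^+ 2 by apply: exprn_gt0; apply: ln_gt0; exact: lt1_12.
have hK2 : 108 * 4130 ^+ 2 < ln (n%:R : R) * (ln (12 : R)) ^+ 2.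
  by have := big_n h2; rewrite ltr_pdivrMr; [exact: id | exact: c2].
exact: (@main_n R n (d n) (p n) n0 hK1 hK2 hd1 hd2 hp0 hp1 hp).
Qed.
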